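(* Let $K$ be a field (of arbitrary characteristic) and $V$ a homogeneous $K$-subspace of $K[x]$. Then $V$ is a Mathieu subspace of $K[x]$ if and only if one of the following holds: 1) $V=K[x]$; 2) $\dim_K V<\infty$ and $1\notin V$; 3) $1\notin V$ and there exists $N\ge1$ such that the ideal $x^NK[x]$ is contained in $V$; 4) $V$ is spanned over $K$ by the monomials $x^{n_i}$ for a strictly increasing infinite sequence of positive integers $\{n_i\mid i\ge1\}$ such that there is no integer $d\ge1$ with $md\in\{n_i\mid i\ge1\}$ for all $m\ge1$.
   Context: A $K$-subspace $V$ of $K[x]$ is homogeneous if it is spanned by the monomials $x^n$ it contains (equivalently, the homogeneous components of each element of $V$ lie in $V$). A $K$-subspace $V$ of a commutative $K$-algebra $\mathcal{A}$ is a Mathieu subspace if for all $a,b\in\mathcal{A}$ with $a^m\in V$ for all $m\ge 1$, one has $a^mb\in V$ for all $m\gg 0$. *)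

(* Defs.v *)
From mathcomp Require Import all_boot all_order all_algebra.
Set Implicit Arguments. Unset Strict Implicit. Unset Printing Implicit Defensive.
Import GRing.Theory.
Local Open Scope ring_scope.

Definition is_subspace (K : fieldType) (V : {poly K} -> Prop) : Prop :=
  V 0 /\ (forall (a : K) (p q : {poly K}), V p -> V q -> V (a *: p + q)).

Definition homogeneous (K : fieldType) (V : {poly K} -> Prop) : Prop :=
  forall p : {poly K}, V p -> forall n : nat, V (p`_n *: 'X^n).

Definition mathieu (K : fieldType) (V : {poly K} -> Prop) : Prop :=
  forall a b : {poly K}, (forall m : nat, (1 <= m)%N -> V (a ^+ m)) ->
    exists N : nat, forall m : nat, (N <= m)%N -> V (a ^+ m * b).

Definition spanned_by_fin (K : fieldType) (V : {poly K} -> Prop)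
  (n : nat) (B : 'I_n -> {poly K}) : Prop :=
  forall p : {poly K}, V p <-> exists c : 'I_n -> K, p = \sum_(i < n) c i *: B i.

Definition finite_dim (K : fieldType) (V : {poly K} -> Prop) : Prop :=
  exists (n : nat) (B : 'I_n -> {poly K}), spanned_by_fin V B.

Definition spanned_by_monomials (K : fieldType) (V : {poly K} -> Prop)
  (s : nat -> nat) : Prop :=
  forall p : {poly K}, V p <->
    exists (M : nat) (c : 'I_M -> K), p = \sum_(i < M) c i *: 'X^(s i).

(* Main.v *)
Require Import Defs.
From mathcomp Require Import all_boot all_order all_algebra.
From Stdlib Require Import Classical ClassicalEpsilon.
Import GRing.Theory.
Set Implicit Arguments. Unset Strict Implicit.
Local Open Scope ring_scope.

Lemma subZ (K : fieldType) (V : {poly K} -> Prop) (c : K) p :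
  is_subspace V -> V p -> V (c *: p).
Proof. by case=> V0 Vl Vp; rewrite -[c *: p]addr0; apply: Vl. Qed.

Lemma subD (K : fieldType) (V : {poly K} -> Prop) p q :
  is_subspace V -> V p -> V q -> V (p + q).
Proof. by case=> V0 Vl Vp Vq; rewrite -[p]scale1r; apply: Vl. Qed.

Lemma subSum (K : fieldType) (V : {poly K} -> Prop) n (F : 'I_n -> {poly K}) :
  is_subspace V -> (forall i, V (F i)) -> V (\sum_(i < n) F i).
Proof.
move=> hV hF; apply: (big_ind V); first by case: hV.
- by move=> x y; apply: subD.
- by move=> i _; apply: hF.
Qed.

Lemma Xn_in (K : fieldType) (V : {poly K} -> Prop) p n :
  is_subspace V -> homogeneous V -> V p -> p`_n != 0 -> V 'X^n.
Proof.
move=> hV hH Vp pn; have := subZ (p`_n)^-1 hV (hH p Vp n).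
by rewrite scalerA mulVf // scale1r.
Qed.

Lemma supp (K : fieldType) (V : {poly K} -> Prop) p :
  is_subspace V -> homogeneous V ->
  (V p <-> forall n, p`_n != 0 -> V 'X^n).
Proof.
move=> hV hH; split; first by move=> Vp n; apply: Xn_in.
move=> h; rewrite -[p]coefK poly_def; apply: subSum => // i.
have [->|nz] := eqVneq p`_i 0; first by rewrite scale0r; case: hV.
by apply: subZ => //; apply: h.
Qed.

Lemma coefXn_sum (K : fieldType) M (c : 'I_M -> K) (g : nat -> nat) j :
  injective g ->
  (\sum_(i < M) c i *: 'X^(g i) : {poly K})`_j =
  if [pick i : 'I_M | g i == j] is Some i then c i else 0.
Proof.
move=> ig; rewrite coef_sum; case: pickP => [i /eqP gi|none].
  rewrite (bigD1 i) //= big1 ?addr0; first by rewrite coefZ coefXn gi eqxx mulr1.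
  move=> k ki; rewrite coefZ coefXn -gi; case: eqP; last by rewrite mulr0.
  by move=> /ig/val_inj ik; rewrite ik eqxx in ki.
rewrite big1 // => i _; rewrite coefZ coefXn.
by case: eqP => [ji|]; [have := none i; rewrite ji eqxx | rewrite mulr0].
Qed.

Lemma inc_lt (s : nat -> nat) : (forall i, (s i < s i.+1)%N) ->
  forall i j, (i < j)%N -> (s i < s j)%N.
Proof.
move=> h i j; elim: j => // j IH; rewrite ltnS leq_eqVlt => /orP [/eqP ->|/IH] //.
by move=> lt; apply: ltn_trans lt (h j).
Qed.

Lemma inc_injf (s : nat -> nat) : (forall i, (s i < s i.+1)%N) -> injective s.
Proof.
move=> h i j e; case: (ltngtP i j) => // lt.
  by have := inc_lt h lt; rewrite e ltnn.
by have := inc_lt h lt; rewrite e ltnn.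
Qed.

Lemma inc_ge (s : nat -> nat) : (forall i, (s i < s i.+1)%N) -> forall i, (i <= s i)%N.
Proof. by move=> h; elim=> // i IH; apply: leq_ltn_trans IH (h i). Qed.

Lemma val_fact (K : fieldType) (a : {poly K}) : a != 0 ->
  exists k, a`_k != 0 /\ a = 'X^k * drop_poly k a.
Proof.
move=> a0.
have ex : exists n, a`_n != 0 by exists (size a).-1; rewrite -lead_coefE lead_coef_eq0.
case: (ex_minnP ex) => k ak mn; exists k; split => //.
apply/polyP => i; rewrite coefXnM coef_drop_poly.
case: ltnP => ik; last by rewrite subnK.
by apply/eqP; apply: contraTT ik => /mn; rewrite -leqNgt.
Qed.

Lemma pow_low (K : fieldType) k (u : {poly K}) m :
  u`_0 != 0 -> (('X^k * u) ^+ m)`_(k * m) != 0.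
Proof.
move=> u0; rewrite exprMn -exprM coefXnM ltnn subnn.
have -> : (u ^+ m)`_0 = u`_0 ^+ m.
  by elim: m => [|m IH]; rewrite ?expr0 ?coefC // !exprS coef0M IH.
by rewrite expf_neq0.
Qed.

Lemma key (K : fieldType) (V : {poly K} -> Prop) (a : {poly K}) :
  is_subspace V -> homogeneous V -> ~ V 1 -> a != 0 ->
  (forall m, (1 <= m)%N -> V (a ^+ m)) ->
  exists k, (1 <= k)%N /\ forall m, (1 <= m)%N -> V 'X^(k * m).
Proof.
move=> hV hH n1 a0 ha; case: (val_fact a0) => k [ak ea].
have ak' : (drop_poly k a)`_0 != 0 by rewrite coef_drop_poly add0n.
exists k; split.
  case: k ak ea ak' => // ak _ _; exfalso; apply: n1.
  by rewrite -(expr0 'X); apply: Xn_in hV hH (ha 1%N isT) _; rewrite expr1.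
move=> m m1; apply: Xn_in hV hH (ha m m1) _.
by rewrite {1}ea; apply: pow_low.
Qed.

Lemma zero_case (K : fieldType) (V : {poly K} -> Prop) (b : {poly K}) :
  is_subspace V -> exists N : nat, forall m : nat, (N <= m)%N -> V (0 ^+ m * b).
Proof.
move=> hV; exists 1%N => m m1; rewrite expr0n; case: m m1 => // m _ /=.
by rewrite mul0r; case: hV.
Qed.

Lemma case2_m (K : fieldType) (V : {poly K} -> Prop) :
  is_subspace V -> homogeneous V -> finite_dim V -> ~ V 1 -> mathieu V.
Proof.
move=> hV hH [n [B hB]] n1 a b ha.
have [->|a0] := eqVneq a 0; first exact: zero_case.
case: (key hV hH n1 a0 ha) => k [k1 hk]; exfalso.
pose L := (\sum_(i < n) size (B i))%N.
have := hk L.+1 isT; case/hB => c e.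
have := congr1 (fun p : {poly K} => p`_(k * L.+1)) e => /= /eqP.
rewrite coefXn eqxx coef_sum big1 ?oner_eq0 // => i _.
rewrite coefZ nth_default ?mulr0 //.
apply: (@leq_trans L); first by rewrite /L (bigD1 i) //= leq_addr.
apply: (@leq_trans L.+1) => //; by rewrite leq_pmull.
Qed.

Lemma case3_m (K : fieldType) (V : {poly K} -> Prop) :
  is_subspace V -> homogeneous V -> ~ V 1 ->
  (exists N : nat, (1 <= N)%N /\ forall q : {poly K}, V ('X^N * q)) -> mathieu V.
Proof.
move=> hV hH n1 [N [N1 hN]] a b ha.
have a0 : a`_0 = 0.
  apply/eqP; apply: contraT => nz; exfalso; apply: n1.
  by rewrite -(expr0 'X); apply: Xn_in hV hH (ha 1%N isT) _; rewrite expr1.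
have ea : a = 'X * drop_poly 1 a.
  apply/polyP => i; rewrite -['X]expr1 coefXnM coef_drop_poly.
  by case: i => [|i] //=; rewrite subn1 addn1.
exists N => m mN; rewrite ea exprMn -mulrA -(subnK mN) exprD -mulrA.
by rewrite mulrCA; apply: hN.
Qed.

Lemma case4_m (K : fieldType) (V : {poly K} -> Prop) (s : nat -> nat) :
  is_subspace V -> homogeneous V -> ~ V 1 ->
  (forall i : nat, (s i < s i.+1)%N) ->
  spanned_by_monomials V s ->
  ~ (exists d : nat, (1 <= d)%N /\
       forall m : nat, (1 <= m)%N -> exists i : nat, (m * d)%N = s i) ->
  mathieu V.
Proof.
move=> hV hH n1 inc hs nod a b ha.
have [->|a0] := eqVneq a 0; first exact: zero_case.
case: (key hV hH n1 a0 ha) => k [k1 hk]; exfalso; apply: nod.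
exists k; split => // m m1; have := hk m m1; case/hs => M [c e].
have := congr1 (fun p : {poly K} => p`_(k * m)) e => /=.
rewrite coefXn eqxx coefXn_sum; last exact: inc_injf.
case: pickP => [i /eqP si _|_ ]; last by move/eqP; rewrite oner_eq0.
by exists i; rewrite si mulnC.
Qed.

Lemma fwd3 (K : fieldType) (V : {poly K} -> Prop) d :
  is_subspace V -> homogeneous V -> mathieu V -> (1 <= d)%N ->
  (forall m, (1 <= m)%N -> V 'X^(m * d)) ->
  exists N : nat, (1 <= N)%N /\ forall q : {poly K}, V ('X^N * q).
Proof.
move=> hV hH hM d1 hd.
pose b : {poly K} := \poly_(i < d) 1.
have [N hN] : exists N, forall m, (N <= m)%N -> V ('X^d ^+ m * b).
  by apply: hM => m m1; rewrite -exprM mulnC; apply: hd.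
have big : forall n, (d * N.+1 <= n)%N -> V 'X^n.
  move=> n hn; have q1 : (N.+1 <= n %/ d)%N by rewrite leq_divRL // mulnC.
  apply: (Xn_in hV hH (hN (n %/ d)%N (ltnW q1))).
  rewrite -exprM coefXnM.
  have le : (d * (n %/ d) <= n)%N by rewrite mulnC leq_trunc_div.
  rewrite ltnNge le /= coef_poly.
  have -> : (n - d * (n %/ d) = n %% d)%N.
    by rewrite {1}(divn_eq n d) mulnC addKn.
  by rewrite ltn_pmod // oner_eq0.
exists (d * N.+1)%N; split; first by rewrite muln_gt0 d1.
move=> q; apply/(supp _ hV hH) => n; rewrite coefXnM.
by case: ltnP => h; [rewrite eqxx | move=> _; apply: big].
Qed.

Lemma fwd2 (K : fieldType) (V : {poly K} -> Prop) B :
  is_subspace V -> homogeneous V ->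
  (forall n, V 'X^n -> (n < B)%N) -> finite_dim V.
Proof.
move=> hV hH hB.
pose Bf (i : 'I_B) : {poly K} :=
  if excluded_middle_informative (V 'X^i) then 'X^i else 0.
have VB : forall i, V (Bf i).
  by move=> i; rewrite /Bf; case: excluded_middle_informative => //; case: hV.
exists B, Bf => p; split.
  move=> Vp; exists (fun i => p`_i); apply/polyP => j.
  have -> : \sum_(i < B) p`_i *: Bf i = \sum_(i < B) p`_i *: 'X^i.
    apply: eq_bigr => i _; rewrite /Bf; case: excluded_middle_informative => // nV.
    have -> : p`_i = 0.
      by apply/eqP; apply: contraT => nz; exfalso; apply: nV; apply: Xn_in Vp nz.
    by rewrite !scale0r.
  rewrite -poly_def coef_poly; case: ltnP => // jB.
  apply/eqP; apply: contraT => nz; have := hB _ (Xn_in hV hH Vp nz).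
  by rewrite ltnNge jB.
case=> c ->; apply: subSum => // i; exact: subZ.
Qed.

Lemma fwd4 (K : fieldType) (V : {poly K} -> Prop) :
  is_subspace V -> homogeneous V -> ~ V 1 ->
  (forall B, exists n, V 'X^n /\ (B < n)%N) ->
  ~ (exists d, (1 <= d)%N /\ forall m, (1 <= m)%N -> V 'X^(m * d)) ->
  exists s : nat -> nat,
           [/\ (forall i : nat, (s i < s i.+1)%N),
               (1 <= s 0)%N,
               spanned_by_monomials V s
             & ~ (exists d : nat, (1 <= d)%N /\
                    forall m : nat, (1 <= m)%N -> exists i : nat, (m * d)%N = s i)].
Proof.
move=> hV hH n1 inf nod.
pose Sb n := if excluded_middle_informative (V 'X^n) then true else false.
have SbP : forall n, Sb n <-> V 'X^n.
  by move=> n; rewrite /Sb; case: excluded_middle_informative.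
have exP : forall n, exists m, (n < m)%N && Sb m.
  move=> n; case: (inf n) => m [Vm nm]; exists m; rewrite nm /=; exact/SbP.
pose nxt n := ex_minn (exP n).
have nxtP : forall n, [/\ (n < nxt n)%N, V 'X^(nxt n) &
                          forall m, (n < m)%N -> V 'X^m -> (nxt n <= m)%N].
  move=> n; rewrite /nxt; case: (ex_minnP (exP n)) => m /andP [nm /SbP Sm] mn.
  split => // k nk Sk; apply: mn; rewrite nk /=; exact/SbP.
pose s := fix f i := if i is i'.+1 then nxt (f i') else nxt 0%N.
have sS : forall i, s i.+1 = nxt (s i) by [].
have inc : forall i, (s i < s i.+1)%N by move=> i; rewrite sS; case: (nxtP (s i)).
have Vs : forall i, V 'X^(s i).
  by case=> [|i]; [case: (nxtP 0%N) | rewrite sS; case: (nxtP (s i))].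
have s0 : (1 <= s 0)%N by case: (nxtP 0%N).
have range : forall n, V 'X^n -> (0 < n)%N -> exists i, s i = n.
  move=> n Vn n0.
  have exI : exists i, (n <= s i)%N by exists n; apply: inc_ge.
  case: (ex_minnP exI) => i ni mn; exists i; apply/eqP; rewrite eqn_leq ni andbT.
  case: i ni mn => [|j] ni mn.
    by case: (nxtP 0%N) => _ _ h; apply: h.
  rewrite sS; case: (nxtP (s j)) => _ _ h; apply: h => //.
  by rewrite ltnNge; apply/negP => /mn; rewrite ltnn.
exists s; split => //.
  move=> p; split.
    move=> Vp; exists (size p), (fun i => p`_(s i)); apply/polyP => j.
    rewrite coefXn_sum; last exact: inc_injf.
    case: pickP => [i /eqP <- //|none].
    apply/eqP; apply: contraT => nz; exfalso.
    have Vj := Xn_in hV hH Vp nz.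
    have j0 : (0 < j)%N.
      by case: j nz Vj none => // _ V1 _; apply: n1; rewrite -(expr0 (@polyX K)).
    case: (range j Vj j0) => i si.
    have ip : (i < size p)%N.
      apply: leq_ltn_trans (inc_ge inc i) _; rewrite si.
      by rewrite ltnNge; apply: contra nz => h; rewrite nth_default.
    by have := none (Ordinal ip); rewrite /= si eqxx.
  by case=> M [c ->]; apply: subSum => // i; apply: subZ.
case=> d [d1 hd]; apply: nod; exists d; split => // m m1.
by case: (hd m m1) => i ->.
Qed.

Theorem proposition3p5 (K : fieldType) (V : {poly K} -> Prop) :
  is_subspace V -> homogeneous V ->
  (mathieu V <->
     [\/ (forall p : {poly K}, V p),
         finite_dim V /\ ~ V 1,
         ~ V 1 /\ (exists N : nat, (1 <= N)%N /\
                     forall q : {poly K}, V ('X^N * q))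
       | exists s : nat -> nat,
           [/\ (forall i : nat, (s i < s i.+1)%N),
               (1 <= s 0)%N,
               spanned_by_monomials V s
             & ~ (exists d : nat, (1 <= d)%N /\
                    forall m : nat, (1 <= m)%N -> exists i : nat, (m * d)%N = s i)]]).
Proof.
move=> hV hH; split.
  move=> hM; case: (classic (V 1)) => [V1|n1].
    apply: Or41 => p; case: (hM 1 p) => [m _|N hN].
      by rewrite expr1n.
    by have := hN N (leqnn N); rewrite expr1n mul1r.
  case: (classic (exists d, (1 <= d)%N /\ forall m, (1 <= m)%N -> V 'X^(m * d)))
    => [[d [d1 hd]]|nod].
    by apply: Or43; split => //; apply: (fwd3 hV hH hM d1 hd).
  case: (classic (exists B, forall n, V 'X^n -> (n < B)%N)) => [[B hB]|ninf].
    by apply: Or42; split => //; apply: (fwd2 hV hH hB).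
  apply: Or44; apply: fwd4 => // B.
  apply: NNPP => hne; apply: ninf; exists B.+1 => n Vn; rewrite ltnS leqNgt.
  by apply/negP => Bn; apply: hne; exists n.
case=> [all|[fd n1]|[n1 hN]|[s [inc s0 hs nod]]].
- by move=> a b _; exists 0%N => m _; apply: all.
- exact: case2_m.
- exact: case3_m.
- apply: (case4_m hV hH _ inc hs nod).
  move=> V1; case/hs: V1 => M [c e].
  have := congr1 (fun p : {poly K} => p`_0) e => /= /eqP.
  rewrite coefC eqxx coefXn_sum; last exact: inc_injf.
  case: pickP => [i /eqP si|_]; last by rewrite oner_eq0.
  have h : forall j, (s 0 <= s j)%N by case=> // j; apply/ltnW/inc_lt.
  by have := h i; rewrite si leqn0 => /eqP s00; rewrite s00 in s0.
Qed.
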